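(* Let $(A,[\cdot,\cdot])$ be an Acaa-algebra over a field $\mathbb K$ of characteristic $0$, and let $e,f\in A$ be linearly independent. If $[e,f]\neq 0$, then $e,f,[e,f]$ are linearly independent.
   Context: An Acaa-algebra over a field $\mathbb K$ of characteristic $0$ is a $\mathbb K$-vector space $A$ with a bilinear product $[\cdot,\cdot]$ which is anticommutative, $[x,y]=-[y,x]$, and satisfies $[x_1,[x_2,x_3]]=[x_2,[x_3,x_1]]$ for all $x_1,x_2,x_3\in A$. *)

(* Defs.v *)
From mathcomp Require Import all_boot all_algebra.
Set Implicit Arguments. Unset Strict Implicit. Unset Printing Implicit Defensive.
Import GRing.Theory.
Local Open Scope ring_scope.

Definition bilinear_prod (K : fieldType) (A : lmodType K) (br : A -> A -> A) :=
  (forall a : K, forall x y z : A, br (a *: x + y) z = a *: br x z + br y z) /\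
  (forall a : K, forall x y z : A, br x (a *: y + z) = a *: br x y + br x z).

Definition acaa_algebra (K : fieldType) (A : lmodType K) (br : A -> A -> A) :=
  [/\ bilinear_prod br,
      (forall x y : A, br x y = - br y x) &
      (forall x1 x2 x3 : A, br x1 (br x2 x3) = br x2 (br x3 x1))].

(* Linear independence of two / three vectors (A may be infinite-dimensional). *)
Definition lin_indep2 (K : fieldType) (A : lmodType K) (u v : A) :=
  forall a b : K, a *: u + b *: v = 0 -> a = 0 /\ b = 0.

Definition lin_indep3 (K : fieldType) (A : lmodType K) (u v w : A) :=
  forall a b c : K, a *: u + b *: v + c *: w = 0 -> [/\ a = 0, b = 0 & c = 0].

(* Main.v *)
Require Import Defs.
From mathcomp Require Import all_boot all_algebra.
Local Open Scope ring_scope.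
Import GRing.Theory.

Theorem mainTheorem2 (K : fieldType) (A : lmodType K) (br : A -> A -> A)
  (hchar : [pchar K] =i pred0)
  (hA : acaa_algebra br)
  (e f : A) (hef : lin_indep2 e f) (hne : br e f != 0) :
  lin_indep3 e f (br e f).
Proof.
case: hA => [[hl hr] hanti hcyc].
have two : forall x : A, x = - x -> x = 0.
  move=> x hx.
  have h2 : (2%:R : K) != 0.
    apply/negP => h; have := hchar 2%N.
    by rewrite inE /= h.
  have : (2%:R : K) *: x == 0 by rewrite scaler_nat mulr2n {1}hx addNr.
  by rewrite scaler_eq0 (negbTE h2) /= => /eqP.
have r0 : forall x : A, br x 0 = 0.
  move=> x; have h := hr (GRing.one K) x 0 0; rewrite !scale1r !addr0 in h.
  by apply: (addrI (br x 0)); rewrite addr0 -h.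
have xx : forall x : A, br x x = 0 by move=> x; apply: two; apply: hanti.
have eef : br e (br e f) = 0.
  apply: two; rewrite {1}hcyc [br f e]hanti.
  have := hr (-1) e (br e f) 0; rewrite addr0 r0 addr0 scaleN1r => ->.
  by rewrite scaleN1r.
have fef : br f (br e f) = 0 by rewrite hcyc xx r0.
have lin : forall (x : A) a b c,
    br x (a *: e + b *: f + c *: br e f) =
    a *: br x e + b *: br x f + c *: br x (br e f).
  move=> x a b c.
  have hs : forall (u : A) (k : K), br x (k *: u) = k *: br x u.
    by move=> u k; have := hr k x u 0; rewrite !addr0 r0 addr0.
  have hd : forall (u v : A), br x (u + v) = br x u + br x v.
    by move=> u v; have := hr (GRing.one K) x u v; rewrite !scale1r.
  by rewrite !hd !hs.
move=> a b c H.
have Hb : b *: br e f = 0.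
  by have := lin e a b c; rewrite H r0 xx eef !scaler0 add0r addr0 => <-.
have Ha : a *: br e f = 0.
  have := lin f a b c; rewrite H r0 xx fef !scaler0 !addr0 [br f e]hanti.
  by move/esym/eqP; rewrite scalerN oppr_eq0 => /eqP.
have hb : b = 0 by move/eqP: Hb; rewrite scaler_eq0 (negbTE hne) orbF => /eqP.
have ha : a = 0 by move/eqP: Ha; rewrite scaler_eq0 (negbTE hne) orbF => /eqP.
split=> //; move: H; rewrite ha hb !scale0r !add0r => /eqP.
by rewrite scaler_eq0 (negbTE hne) orbF => /eqP.
Qed.
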